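(* The maps $\mathfrak{F}_{\pm}$ are diffeomorphisms.
   Context: On the De Sitter–Kerr spacetime (Boyer–Lindquist coordinates $(t,r,\theta,\phi)$, $r\in(r_-,r_+)$), fix $r_0\in(r_-,r_+)$ and let $T(r)=\int_{r_0}^r\frac{\lambda(a^2+r^2)}{\Delta_r}dr$, $A(r)=\int_{r_0}^r\frac{\lambda a}{\Delta_r}dr$ (increasing homeomorphisms $(r_-,r_+)\to\mathbb{R}$). ${}^*$Kerr coordinates: $({}^*t,r,\theta,{}^*\phi)=(t-T(r),r,\theta,\phi-A(r))$; Kerr${}^*$ coordinates: $(t^*,r,\theta,\phi^* )=(t+T(r),r,\theta,\phi+A(r))$. The future horizons are $\mathfrak{H}^{future}_+=\mathbb{R}_{{}^*t}\times\{r_+\}\times\mathbb{S}^2$ and $\mathfrak{H}^{future}_-=\mathbb{R}_{t^*}\times\{r_-\}\times\mathbb{S}^2$, and $\Sigma_0=\{t=0\}$. Define $\mathfrak{F}_+:\Sigma_0\to\mathfrak{H}^{future}_+$, $(0,r,\theta,\phi)\mapsto(-T(r),r_+,\theta,\phi-A(r))_{{}^*\mathrm{Kerr}}$ (mapping the intersection of an outgoing principal null geodesic with $\Sigma_0$ to its intersection with $\mathfrak{H}^{future}_+$), and $\mathfrak{F}_-:\Sigma_0\to\mathfrak{H}^{future}_-$ similarly (along incoming principal null geodesics, in Kerr${}^*$ coordinates). *)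

(* Defs.v *)
From HB Require Import structures.
From mathcomp Require Import all_boot all_order all_algebra.
From mathcomp Require Import all_classical all_reals all_analysis.
Set Implicit Arguments. Unset Strict Implicit. Unset Printing Implicit Defensive.
Import Order.TTheory GRing.Theory Num.Theory.
Import numFieldNormedType.Exports.
Local Open Scope classical_set_scope.
Local Open Scope ring_scope.

Section DSK.
Variable R : realType.

(** De Sitter–Kerr metric functions (mass M, angular momentum a, cosmological constant Lam). *)
Definition Delta_r (M a Lam r : R) : R :=
  (r ^+ 2 + a ^+ 2) * (1 - Lam * r ^+ 2 / 3) - 2 * M * r.
Definition lambdaK (a Lam : R) : R := 1 + Lam * a ^+ 2 / 3.

Definition oint (f : R -> R) (x0 x : R) : R :=
  if x0 <= x then Rintegral lebesgue_measure `[x0, x] f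
  else - Rintegral lebesgue_measure `[x, x0] f.

Definition Tfun (M a Lam r0 r : R) : R :=
  oint (fun s => lambdaK a Lam * (a ^+ 2 + s ^+ 2) / Delta_r M a Lam s) r0 r.
Definition Afun (M a Lam r0 r : R) : R :=
  oint (fun s => lambdaK a Lam * a / Delta_r M a Lam s) r0 r.

Definition mk4 (x0 x1 x2 x3 : R) : 'rV[R]_4 :=
  \row_(i < 4) [:: x0; x1; x2; x3]`_i.
Definition c4 (v : 'rV[R]_4) (i : nat) : R := v ord0 (inord i).

(** S^2 is the unit sphere of R^3, with (sin th cos ph, sin th sin ph, cos th)
   the point of polar coordinates (th, ph).
   Sigma_0 = {t = 0} ~ (r_-, r_+) x S^2 with coordinates (r, omega),
   embedded in R^4 as (r, omega). *)
Definition Sigma0 (rm rp : R) : set 'rV[R]_4 :=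
  [set v | rm < c4 v 0 < rp /\ c4 v 1 ^+ 2 + c4 v 2 ^+ 2 + c4 v 3 ^+ 2 = 1].

(** A future horizon R_{s} x {r_pm} x S^2, with coordinates (s, omega)
   (s = *t for H_+, s = t^* for H_-), embedded in R^4 as (s, omega). *)
Definition Horizon : set 'rV[R]_4 :=
  [set v | c4 v 1 ^+ 2 + c4 v 2 ^+ 2 + c4 v 3 ^+ 2 = 1].

(** (s, omega) with omega rotated by angle al about the axis (phi -> phi + al). *)
Definition shift_rot (s al : R) (v : 'rV[R]_4) : 'rV[R]_4 :=
  mk4 s (cos al * c4 v 1 - sin al * c4 v 2)
        (sin al * c4 v 1 + cos al * c4 v 2) (c4 v 3).

(** F_+ : (0, r, th, ph) |-> (-T r, r_+, th, ph - A r) in *Kerr coordinates. *)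
Definition Fplus (M a Lam r0 : R) (v : 'rV[R]_4) : 'rV[R]_4 :=
  shift_rot (- Tfun M a Lam r0 (c4 v 0)) (- Afun M a Lam r0 (c4 v 0)) v.
(** F_- : (0, r, th, ph) |-> (T r, r_-, th, ph + A r) in Kerr* coordinates. *)
Definition Fminus (M a Lam r0 : R) (v : 'rV[R]_4) : 'rV[R]_4 :=
  shift_rot (Tfun M a Lam r0 (c4 v 0)) (Afun M a Lam r0 (c4 v 0)) v.

Fixpoint iterD (vs : seq 'rV[R]_4) (f : 'rV[R]_4 -> 'rV[R]_4) : 'rV[R]_4 -> 'rV[R]_4 :=
  match vs with
  | [::] => f
  | v :: vs' => fun x => derive (iterD vs' f) x v
  end.

Definition smooth_on (U : set 'rV[R]_4) (f : 'rV[R]_4 -> 'rV[R]_4) : Prop :=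
  open U /\
  forall vs : seq 'rV[R]_4,
    (forall x v, U x -> derivable (iterD vs f) x v) /\
    (forall x, U x -> {for x, continuous (iterD vs f)}).

Definition smooth_map (S : set 'rV[R]_4) (f : 'rV[R]_4 -> 'rV[R]_4) : Prop :=
  forall p, S p -> exists U g, U p /\ smooth_on U g /\
    (forall x, U x -> S x -> g x = f x).

Definition diffeomorphism (S N : set 'rV[R]_4) (f : 'rV[R]_4 -> 'rV[R]_4) : Prop :=
  (forall x, S x -> N (f x)) /\ smooth_map S f /\
  exists g, (forall y, N y -> S (g y)) /\
    (forall x, S x -> g (f x) = x) /\ (forall y, N y -> f (g y) = y) /\
    smooth_map N g.

End DSK.

(* Main.v *)
Require Import Defs.
From HB Require Import structures.
From mathcomp Require Import all_boot all_order all_algebra.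
From mathcomp Require Import all_classical all_reals all_analysis.
Set Implicit Arguments. Unset Strict Implicit. Unset Printing Implicit Defensive.
Import Order.TTheory GRing.Theory Num.Theory.
Import numFieldNormedType.Exports.
Local Open Scope classical_set_scope.
Local Open Scope ring_scope.
Section Ck.
Context {R : realType}.

Fixpoint Ck {V W : normedModType R} (n : nat) (U : set V) (f : V -> W) : Prop :=
  match n with
  | 0 => forall x, U x -> {for x, continuous f}
  | n.+1 => (forall x, U x -> {for x, continuous f}) /\
            (forall x v, U x -> derivable f x v) /\
            (forall v, Ck n U (fun x => 'D_v f x))
  end.

Variables (V W : normedModType R).
Implicit Types (U : set V).

Lemma Ck_cont n U (f : V -> W) : Ck n U f -> forall x, U x -> {for x, continuous f}.
Proof. by case: n => [|n] //= [] . Qed.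

Lemma Ck_S n U (f : V -> W) : Ck n.+1 U f -> Ck n U f.
Proof.
elim: n f => [|n IH] f /=; first by case.
by case=> c [d h]; split => // ; split => // v; apply: IH; exact: h.
Qed.

Lemma near_of_open U (x : V) (P : V -> Prop) : open U -> U x ->
  (forall y, U y -> P y) -> \forall y \near x, P y.
Proof.
move=> oU Ux HP; apply: filterS (open_nbhs_nbhs (conj oU Ux)) => y; exact: HP.
Qed.

Lemma Ck_ext n U (f g : V -> W) : open U -> (forall x, U x -> f x = g x) ->
  Ck n U f -> Ck n U g.
Proof.
move=> oU; elim: n f g => [|n IH] f g fg.
  move=> cf x Ux; have := cf x Ux.
  have nfg : {near x, f =1 g} by apply: near_of_open oU Ux fg.
  move=> H; rewrite /prop_for /continuous_at -(fg x Ux).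
  exact: (cvg_trans (near_eq_cvg nfg) H).
move=> [cf [df hf]]; split; [|split].
- move=> x Ux; have := cf x Ux.
  have nfg : {near x, f =1 g} by apply: near_of_open oU Ux fg.
  move=> H; rewrite /prop_for /continuous_at -(fg x Ux).
  exact: (cvg_trans (near_eq_cvg nfg) H).
- move=> x v Ux; apply: near_eq_derivable (df x v Ux).
  exact: near_of_open oU Ux fg.
- move=> v; apply: IH (hf v) => x Ux; apply: near_eq_derive.
  exact: near_of_open oU Ux fg.
Qed.

Lemma Ck_sub n U U' (f : V -> W) : U' `<=` U -> Ck n U f -> Ck n U' f.
Proof.
move=> sU; elim: n f => [|n IH] f /=; first by move=> cf x /sU; exact: cf.
move=> [cf [df hf]]; split; [|split].
- by move=> x /sU; exact: cf.
- by move=> x v /sU; exact: df.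
- by move=> v; apply: IH.
Qed.

Lemma Ck_cst n U (c : W) : Ck n U (fun _ => c).
Proof.
elim: n c => [|n IH] c /=; first by move=> x _; exact: cvg_cst.
split; [|split].
- by move=> x _; exact: cvg_cst.
- by move=> x v _; exact: derivable_cst.
- move=> v; have -> : (fun x => 'D_v (fun=> c) x) = (fun _ => 0 : W).
    by apply/funext => x; exact: derive_cst.
  exact: IH.
Qed.

Lemma Ck_add n U (f g : V -> W) : open U -> Ck n U f -> Ck n U g ->
  Ck n U (fun x => f x + g x).
Proof.
move=> oU; elim: n f g => [|n IH] f g /=.
  by move=> cf cg x Ux; apply: continuousD; [exact: cf|exact: cg].
move=> [cf [df hf]] [cg [dg hg]]; split; [|split].
- by move=> x Ux; apply: continuousD; [exact: cf|exact: cg].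
- by move=> x v Ux; apply: derivableD; [exact: df|exact: dg].
- move=> v; apply: (@Ck_ext _ _ (fun x => 'D_v f x + 'D_v g x)) => //.
    by move=> x Ux; rewrite (@deriveD _ _ _ f g) //; [exact: df|exact: dg].
  exact: IH.
Qed.


Lemma Ck_opp n U (f : V -> W) : open U -> Ck n U f -> Ck n U (fun x => - f x).
Proof.
move=> oU; elim: n f => [|n IH] f /=.
  by move=> cf x Ux; apply: continuousN; exact: cf.
move=> [cf [df hf]]; split; [|split].
- by move=> x Ux; apply: continuousN; exact: cf.
- by move=> x v Ux; apply: derivableN; exact: df.
- move=> v; apply: (@Ck_ext n U (fun x => - 'D_v f x)) => //.
    by move=> x Ux; rewrite (@deriveN _ _ _ f) //; exact: df.
  exact: IH.
Qed.

Lemma der_scal_cst (k : V -> R) (w : W) x v : derivable k x v ->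
  (fun h => h^-1 *: (((fun y => k y *: w) \o shift x) (h *: v) - k x *: w))
    @ 0^' --> 'D_v k x *: w.
Proof.
move=> dk; have := @cvgZr_tmp _ _ _ _ _ _ _ w dk.
have -> : (fun h : R => (h^-1 *: ((k \o shift x) (h *: v) - k x)) *: w) =
  (fun h => h^-1 *: (((fun y => k y *: w) \o shift x) (h *: v) - k x *: w)).
  by apply/funext => h /=; rewrite -scalerA scalerBl.
exact.
Qed.

Lemma derivable_scal_cst (k : V -> R) (w : W) x v : derivable k x v ->
  derivable (fun y => k y *: w) x v.
Proof. by move=> dk; apply/cvg_ex; eexists; exact: (@der_scal_cst k w x v dk). Qed.

Lemma derive_scal_cst (k : V -> R) (w : W) x v : derivable k x v ->
  'D_v (fun y => k y *: w) x = 'D_v k x *: w.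
Proof. by move=> dk; apply: cvg_lim; [exact: norm_hausdorff|exact: der_scal_cst]. Qed.

Lemma Ck_scal n U (k : V -> R) (w : W) : open U -> Ck n U k ->
  Ck n U (fun x => k x *: w).
Proof.
move=> oU; elim: n k => [|n IH] k /=.
  by move=> ck x Ux; apply: continuousZr_tmp; exact: ck.
move=> [ck [dk hk]]; split; [|split].
- by move=> x Ux; apply: continuousZr_tmp; exact: ck.
- by move=> x v Ux; apply: derivable_scal_cst; exact: dk.
- move=> v; apply: (@Ck_ext _ _ (fun x => 'D_v k x *: w)) => //.
    by move=> x Ux; rewrite derive_scal_cst //; exact: dk.
  exact: IH.
Qed.

Lemma derive_dir1 (f : V -> W) x v :
  'D_v f x = 'D_1 (fun t : R => f (t *: v + x)) 0.
Proof.
rewrite /derive.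
have -> : (fun h : R => h^-1 *: (((fun t : R => f (t *: v + x)) \o shift 0) (h *: 1) - f (0 *: v + x)))
  = (fun h => h^-1 *: ((f \o shift x) (h *: v) - f x)) by
  apply/funext => h; rewrite /= addr0 scale0r add0r [_%:A]mulr1.
by [].
Qed.

End Ck.

Section Ck1.
Context {R : realType}.
Variables (V : normedModType R).

Lemma Ck_mul n U (f g : V -> R) : open U -> Ck n U f -> Ck n U g ->
  Ck n U (fun x => f x * g x).
Proof.
move=> oU; elim: n f g => [|n IH] f g /=.
  by move=> cf cg x Ux; apply: continuousM; [exact: cf|exact: cg].
move=> [cf [df hf]] [cg [dg hg]]; split; [|split].
- by move=> x Ux; apply: continuousM; [exact: cf|exact: cg].
- by move=> x v Ux; apply: derivableM; [exact: df|exact: dg].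
- move=> v; apply: (Ck_ext (f := fun x => f x * 'D_v g x + g x * 'D_v f x)) => //.
    by move=> x Ux; rewrite (@deriveM _ _ f g) //; [exact: df|exact: dg].
  apply: Ck_add => //; apply: IH => //.
  + exact: (Ck_S (conj cf (conj df hf))).
  + exact: (Ck_S (conj cg (conj dg hg))).
Qed.

Lemma chain_rule (h : R -> R) (phi : V -> R) x v :
  derivable phi x v -> derivable h (phi x) 1 ->
  derivable (fun y => h (phi y)) x v /\
  'D_v (fun y => h (phi y)) x = 'D_1 h (phi x) * 'D_v phi x.
Proof.
move=> dphi dh.
set g := fun t : R => phi (t *: v + x).
have dg : derivable g 0 1 by exact: (derivable1P _ _ _).1 dphi.
have g0 : g 0 = phi x by rewrite /g scale0r add0r.
have dhg : derivable (h \o g) 0 1.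
  apply/derivable1_diffP/differentiable_comp; first exact/derivable1_diffP.
  by rewrite g0; exact/derivable1_diffP.
split; first exact: (derivable1P _ _ _).2.
have dh' : derivable h (g 0) 1 by rewrite g0.
have E := derive1_comp dg dh'.
rewrite !derive1E g0 in E.
rewrite derive_dir1 (derive_dir1 phi).
exact: E.
Qed.


Lemma Ck_comp n (U : set V) (I : set R) (h : R -> R) (phi : V -> R) :
  open U -> (forall x, U x -> I (phi x)) -> Ck n I h -> Ck n U phi ->
  Ck n U (fun x => h (phi x)).
Proof.
move=> oU UI; elim: n h phi UI => [|n IH] h phi UI /=.
  move=> ch cphi x Ux; apply: (@continuous_comp _ _ _ phi h).
    exact: cphi.
  exact: ch (UI _ Ux).
move=> [ch [dh hh]] [cphi [dphi hphi]]; split; [|split].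
- move=> x Ux; apply: (@continuous_comp _ _ _ phi h); first exact: cphi.
  exact: ch (UI _ Ux).
- move=> x v Ux; apply: (chain_rule (dphi x v Ux) (dh _ 1 (UI _ Ux))).1.
- move=> v; apply: (Ck_ext (f := fun x => 'D_1 h (phi x) * 'D_v phi x)) => //.
    by move=> x Ux; rewrite (chain_rule (dphi x v Ux) (dh _ 1 (UI _ Ux))).2.
  apply: (Ck_mul oU _ (hphi v)).
  apply: (IH (fun y => 'D_1 h y) phi UI (hh 1)).
  exact: (Ck_S (conj cphi (conj dphi hphi))).
Qed.

End Ck1.
Section Ck1D.
Context {R : realType}.

Lemma D1v (h : R -> R) x v : derivable h x 1 ->
  derivable h x v /\ 'D_v h x = v * 'D_1 h x.
Proof.
move=> dh; have dif := (derivable1_diffP h x).1 dh.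
split; first exact: diff_derivable.
by rewrite deriveE // diff1E // derive1E.
Qed.

Lemma Ck1_intro n (I : set R) (h : R -> R) : open I ->
  (forall x, I x -> derivable h x 1) -> Ck n I (fun x => 'D_1 h x) -> Ck n.+1 I h.
Proof.
move=> oI dh H; split; [|split].
- move=> x Ix; apply: differentiable_continuous.
  exact: (derivable1_diffP h x).1 (dh x Ix).
- by move=> x v Ix; exact: (D1v v (dh x Ix)).1.
- move=> v; apply: (Ck_ext (f := fun x => v * 'D_1 h x)) => //.
    by move=> x Ix; rewrite (D1v v (dh x Ix)).2.
  by apply: Ck_mul => //; exact: Ck_cst.
Qed.

Lemma Ck_id {V : normedModType R} n (U : set V) : Ck n U (fun x => x).
Proof.
elim: n => [|n IH] /=; first by move=> x _; exact: cvg_id.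
split; [|split].
- by move=> x _; exact: cvg_id.
- by move=> x v _; exact: derivable_id.
- move=> v; have -> : (fun x : V => 'D_v (fun y => y) x) = (fun _ => v).
    by apply/funext => x; exact: derive_id.
  exact: Ck_cst.
Qed.

Lemma open_oo (a b : R) : open [set x : R | a < x < b].
Proof.
have -> : [set x : R | a < x < b] = [set x | a < x] `&` [set x | x < b].
  by apply/seteqP; split => x /=; [move/andP|move=> [-> ->]].
by apply: openI; [exact: open_gt|exact: open_lt].
Qed.

Lemma Ck_inv n : Ck n [set x : R | 0 < x] (fun x => x^-1).
Proof.
have oI : open [set x : R | 0 < x] by exact: open_gt.
elim: n => [|n IH].
  move=> x /= x0; apply: continuousV; first by rewrite gt_eqF.
  exact: cvg_id.
apply: Ck1_intro => //.
  by move=> x /= x0; apply: derivableV; [rewrite gt_eqF|exact: derivable_id].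
apply: (@Ck_ext R R R n _ (fun x => (-1) * (x^-1 * x^-1))) => //.
  move=> x /= x0.
  have dV := @deriveV R R (fun y => y) x 1 (lt0r_neq0 x0) (@derivable_id _ _ x 1).
  rewrite dV.
  by rewrite derive_id /GRing.scale /= mulr1 -exprVn expr2 mulN1r.
by apply: Ck_mul => //; [exact: Ck_cst|exact: Ck_mul].
Qed.

End Ck1D.

Section Ck4.
Context {R : realType}.

Lemma coord_dq (x v : 'rV[R]_4) j :
  \forall h \near (0:R)^',
    h^-1 *: (((fun y : 'rV[R]_4 => y ord0 j) \o shift x) (h *: v) - x ord0 j) = v ord0 j.
Proof.
near=> h.
have hn0 : h != 0 by near: h; exact: nbhs_dnbhs_neq.
by rewrite /= !mxE addrK /GRing.scale /= mulKf.
Unshelve. all: by end_near. Qed.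

Lemma Ck_coord n (U : set 'rV[R]_4) j : Ck n U (fun x => x ord0 j).
Proof.
elim: n => [|n IH] /=; first by move=> x _; exact: coord_continuous.
split; [|split].
- by move=> x _; exact: coord_continuous.
- by move=> x v _; exact: is_cvg_near_cst _ (coord_dq x v j).
- move=> v; have -> : (fun x : 'rV[R]_4 => 'D_v (fun y : 'rV[R]_4 => y ord0 j) x) = (fun _ => v ord0 j).
    by apply/funext => x; exact: lim_near_cst (coord_dq x v j).
  exact: Ck_cst.
Qed.

Lemma iterD_Ck (U : set 'rV[R]_4) (f : 'rV[R]_4 -> 'rV[R]_4) vs n :
  Ck (size vs + n)%N U f -> Ck n U (Defs.iterD vs f).
Proof.
elim: vs n => [|v vs IH] n; first by [].
rewrite [size _]/= addSnnS => /IH [_ [_ H]]; exact: H.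
Qed.

Lemma smooth_on_of (U : set 'rV[R]_4) (f : 'rV[R]_4 -> 'rV[R]_4) :
  open U -> (forall n, Ck n U f) -> smooth_on U f.
Proof.
move=> oU H; split => // vs; split.
- move=> x v Ux; have [_ [d _]] := iterD_Ck (H (size vs + 1)%N).
  exact: d.
- move=> x Ux; have := iterD_Ck (H (size vs + 0)%N).
  by move/Ck_cont; apply.
Qed.

End Ck4.
From mathcomp Require Import ring lra.

Section Trig.
Context {R : realType}.

Lemma Ck_sincos n : Ck n setT (@sin R) /\ Ck n setT (@cos R).
Proof.
elim: n => [|n [Hs Hc]].
  by split => x _; [exact: continuous_sin|exact: continuous_cos].
split; apply: Ck1_intro; first exact: openT.
- by move=> x _; exact: derivable_sin.
- have -> : (fun x => 'D_1 (@sin R) x) = @cos R by apply/funext => x; rewrite derive_val.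
  exact: Hc.
- exact: openT.
- by move=> x _; exact: derivable_cos.
- apply: (@Ck_ext R R R n _ (fun x => (-1) * sin x)); first exact: openT.
    by move=> x _; rewrite derive_val mulN1r.
  by apply: Ck_mul; [exact: openT|exact: Ck_cst|].
Qed.

End Trig.

Lemma andP_intro (a b : bool) : a -> b -> a && b.
Proof. by move=> -> ->. Qed.

Section OintDeriv.
Context {R : realType}.
Notation mu := (@lebesgue_measure R).

Lemma oint_split (g : R -> R) (c u r0 y : R) :
  mu.-integrable `[c, u] (EFin \o g) -> c <= r0 <= u -> c <= y <= u ->
  oint g r0 y = \int[mu]_(t in `[c, y]) g t - \int[mu]_(t in `[c, r0]) g t.
Proof.
move=> ig /andP[cr0 r0u] /andP[cy yu].
have iS : forall a b, c <= a -> b <= u -> mu.-integrable `[a, b] (EFin \o g).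
  move=> a b ca bu; apply: integrableS ig => //.
  by apply: subset_itvScc.
rewrite /oint; case: ifPn => [r0y|].
  have i1 := iS c y (lexx c) yu.
  rewrite (@Rintegral_itvB _ g (BLeft c) (BRight y) r0 i1); last 2 first.
    by rewrite bnd_simp.
    by rewrite bnd_simp.
  by rewrite Rintegral_itv_obnd_cbnd //; apply: integrableS (iS r0 y cr0 yu) => //;
    exact: subset_itv_oc_cc.
rewrite -ltNge => yr0.
have i1 := iS c r0 (lexx c) r0u.
rewrite -[RHS]opprB (@Rintegral_itvB _ g (BLeft c) (BRight r0) y i1); last 2 first.
  by rewrite bnd_simp.
  by rewrite bnd_simp ltW.
by rewrite Rintegral_itv_obnd_cbnd //; apply: integrableS (iS y r0 cy r0u) => //;
    exact: subset_itv_oc_cc.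
Qed.


Lemma oint_deriv (g : R -> R) (rm rp r0 x : R) :
  (forall y, rm < y < rp -> {for y, continuous g}) -> rm < r0 < rp -> rm < x < rp ->
  derivable (oint g r0) x 1 /\ 'D_1 (oint g r0) x = g x.
Proof.
move=> cg /andP[m0 p0] /andP[mx xp].
have [c [mc [cx cr0]]] : exists c, rm < c /\ c < x /\ c < r0.
  by case: (leP x r0) => h; [exists ((rm + x) / 2)|exists ((rm + r0) / 2)]; split; lra.
have [u [xu [r0u up]]] : exists u, x < u /\ r0 < u /\ u < rp.
  by case: (leP x r0) => h; [exists ((r0 + rp) / 2)|exists ((x + rp) / 2)]; split; lra.
have ig : mu.-integrable `[c, u] (EFin \o g).
  apply: continuous_compact_integrable; first exact: segment_compact.
  apply: continuous_in_subspaceT => y; rewrite inE /= in_itv /= => /andP[cy yu].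
  by apply: cg; apply/andP; split; lra.
set G := fun y => \int[mu]_(t in `[c, y]) g t.
have E : forall y, c < y < u -> G y - G r0 = oint g r0 y.
  move=> y /andP[cy yu]; rewrite (@oint_split g c u) //; apply/andP; split; lra.
have nE : \forall y \near x, G y - G r0 = oint g r0 y.
  apply: (@near_of_open _ _ [set y | c < y < u]); [exact: open_oo| |exact: E].
  by rewrite /= cx xu.
have [dG DG] := @continuous_FTC1_closed R g c x u xu ig cx (cg x (andP_intro mx xp)).
have dG' : derivable (fun y => G y - G r0) x 1.
  exact: (@derivableB R R R G (fun _ => G r0) x 1 dG (derivable_cst _ _ _)).
split; first exact: (@near_eq_derivable R R R (fun y => G y - G r0) (oint g r0) x 1 nE dG').
rewrite -(@near_eq_derive R R R (fun y => G y - G r0) (oint g r0) x 1 nE).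
rewrite (@deriveB R R R G (fun _ => G r0) x 1 dG (derivable_cst _ _ _)).
by rewrite derive_cst subr0 -derive1E.
Qed.

End OintDeriv.
Section LogBound.
Context {R : realType}.

Lemma cont_of_der (F : R -> R) x : derivable F x 1 -> {for x, continuous F}.
Proof. by move=> d; apply: differentiable_continuous; exact/derivable1_diffP. Qed.

Lemma ln_shift_der (p s : R) : s < p ->
  derivable (fun y => ln (p - y)) s 1 /\ 'D_1 (fun y => ln (p - y)) s = - (p - s)^-1.
Proof.
move=> sp; have ps0 : 0 < p - s by rewrite subr_gt0.
have dphi : derivable (fun y : R => p - y) s 1.
  exact: (@derivableB R R R (fun _ => p) (fun y => y) s 1 (derivable_cst _ _ _) (@derivable_id _ _ s 1)).
have vphi : 'D_1 (fun y : R => p - y) s = -1.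
  rewrite (@deriveB R R R (fun _ => p) (fun y => y) s 1 (derivable_cst _ _ _) (@derivable_id _ _ s 1)).
  by rewrite derive_cst derive_id sub0r.
have [dl vl] := is_derive1_ln ps0.
have [d v] := chain_rule dphi dl.
by split => //; rewrite v vl vphi mulrN1.
Qed.

Lemma log_unbounded (F : R -> R) (c p r0 : R) : 0 < c -> r0 < p ->
  (forall s, r0 <= s < p -> derivable F s 1 /\ c / (p - s) <= 'D_1 F s) ->
  forall B, exists s, r0 < s < p /\ B <= F s.
Proof.
move=> c0 r0p HF B.
set G := fun s => F s + c * ln (p - s).
have dG : forall s, r0 <= s < p ->
    derivable G s 1 /\ 'D_1 G s = 'D_1 F s - c / (p - s).
  move=> s /andP[r0s sp]; have [dF _] := HF s (andP_intro r0s sp).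
  have [dl vl] := ln_shift_der sp.
  have dcl : derivable (fun y => c * ln (p - y)) s 1.
    exact: (@derivableM R R (fun _ => c) (fun y => ln (p - y)) s 1 (derivable_cst _ _ _) dl).
  have vcl : 'D_1 (fun y => c * ln (p - y)) s = - (c / (p - s)).
    rewrite (@deriveM R R (fun _ => c) (fun y => ln (p - y)) s 1 (derivable_cst _ _ _) dl).
    by rewrite derive_cst vl /GRing.scale /= mulr0 addr0 mulrN.
  split; first exact: (@derivableD R R R F (fun y => c * ln (p - y)) s 1 dF dcl).
  by rewrite (@deriveD R R R F (fun y => c * ln (p - y)) s 1 dF dcl) vcl.
have Gmono : forall s, r0 <= s < p -> G r0 <= G s.
  move=> s /andP[r0s sp].
  apply: (@ger0_derive1_ndecr R G r0 s) => //.
  - move=> y; rewrite in_itv /= => /andP[r0y ys].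
    have yI : r0 <= y < p by apply/andP; split; [exact: ltW|exact: lt_trans sp].
    exact: (dG y yI).1.
  - move=> y; rewrite in_itv /= => /andP[r0y ys].
    have yI : r0 <= y < p by apply/andP; split; [exact: ltW|exact: lt_trans sp].
    rewrite derive1E (dG y yI).2 subr_ge0; exact: (HF y yI).2.
  - apply: continuous_in_subspaceT => y; rewrite inE /= in_itv /= => /andP[r0y ys].
    apply: cont_of_der.
    have yI : r0 <= y < p by apply/andP; split => //; exact: le_lt_trans sp.
    exact: (dG y yI).1.
set K0 := F r0 + c * ln (p - r0).
set N := `|B - K0| / c + `|ln (p - r0)| + 1.
have N0 : 0 < N by rewrite ltr_pwDr // addr_ge0 // divr_ge0 // ltW.
set s := p - expR (- N).
have e0 := expR_gt0 (- N).
have sp : s < p by rewrite /s ltrBlDr ltrDl.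
have r0s : r0 < s.
  rewrite /s ltrBrDl -ltrBrDr.
  rewrite -[X in _ < X]lnK; last by rewrite posrE subr_gt0.
  rewrite ltr_expR.
  have : - ln (p - r0) <= `|ln (p - r0)| by rewrite -normrN ler_norm.
  have A0 : 0 <= `|B - K0| / c by rewrite divr_ge0 // ltW.
  rewrite /N; lra.
exists s; split; first by rewrite r0s sp.
have := Gmono s (andP_intro (ltW r0s) sp).
have ee : p - (p - expR (- N)) = expR (- N) by lra.
rewrite /G /s ee expRK.
have cA : c * (`|B - K0| / c) = `|B - K0| by rewrite mulrC divfK // gt_eqF.
have nB : B - K0 <= `|B - K0| := ler_norm _.
have cl : 0 <= c * `|ln (p - r0)| by rewrite mulr_ge0 // ltW.
rewrite /N !mulrN !mulrDr cA mulr1 => h.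
rewrite /K0 in nB h; lra.
Qed.

End LogBound.
Section R4.
Context {R : realType}.

Lemma c4_mk4 (x0 x1 x2 x3 : R) :
  [/\ c4 (mk4 x0 x1 x2 x3) 0 = x0, c4 (mk4 x0 x1 x2 x3) 1 = x1,
      c4 (mk4 x0 x1 x2 x3) 2 = x2 & c4 (mk4 x0 x1 x2 x3) 3 = x3].
Proof. by rewrite /c4 /mk4 !mxE !inordK. Qed.

Lemma mk4_c4 (v : 'rV[R]_4) : mk4 (c4 v 0) (c4 v 1) (c4 v 2) (c4 v 3) = v.
Proof.
apply/rowP => i; rewrite /mk4 mxE /c4.
have -> : (ord0 = 0 :> 'I_1) by [].
by case: i => [[|[|[|[|k]]]] Hk] //=; congr (v _ _); apply/val_inj; rewrite /= inordK.
Qed.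

Definition e4 (i : nat) : 'rV[R]_4 :=
  mk4 (if i == 0%N then 1 else 0) (if i == 1%N then 1 else 0)
      (if i == 2%N then 1 else 0) (if i == 3%N then 1 else 0).

Lemma mk4_sum (x0 x1 x2 x3 : R) :
  mk4 x0 x1 x2 x3 = x0 *: e4 0 + x1 *: e4 1 + x2 *: e4 2 + x3 *: e4 3.
Proof.
apply/rowP => i; rewrite !mxE.
by case: i => [[|[|[|[|k]]]] Hk] //=; rewrite !mulr1 !mulr0 ?addr0 ?add0r.
Qed.

Lemma open_strip (rm rp : R) : open [set v : 'rV[R]_4 | rm < c4 v 0 < rp].
Proof.
have -> : [set v : 'rV[R]_4 | rm < c4 v 0 < rp] =
   (fun v : 'rV[R]_4 => v ord0 (inord 0)) @^-1` [set x | rm < x < rp] by [].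
apply: open_comp; last exact: open_oo.
by move=> x _; exact: coord_continuous.
Qed.

Lemma Ck_c4 n (U : set 'rV[R]_4) i : Ck n U (fun v => c4 v i).
Proof. exact: (Ck_coord n U (inord i)). Qed.

Lemma Ck_mk4 n (U : set 'rV[R]_4) (f0 f1 f2 f3 : 'rV[R]_4 -> R) : open U ->
  Ck n U f0 -> Ck n U f1 -> Ck n U f2 -> Ck n U f3 ->
  Ck n U (fun v => mk4 (f0 v) (f1 v) (f2 v) (f3 v)).
Proof.
move=> oU h0 h1 h2 h3.
have -> : (fun v => mk4 (f0 v) (f1 v) (f2 v) (f3 v)) =
  (fun v => f0 v *: e4 0 + f1 v *: e4 1 + f2 v *: e4 2 + f3 v *: e4 3).
  by apply/funext => v; rewrite mk4_sum.
apply: Ck_add => //; last exact: Ck_scal.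
apply: Ck_add => //; last exact: Ck_scal.
apply: Ck_add => //; exact: Ck_scal.
Qed.

Lemma rot_sq (C S u v w : R) : C ^+ 2 + S ^+ 2 = 1 ->
  (C * u - S * v) ^+ 2 + (S * u + C * v) ^+ 2 + w ^+ 2 = u ^+ 2 + v ^+ 2 + w ^+ 2.
Proof.
move=> h; have -> : (C * u - S * v) ^+ 2 + (S * u + C * v) ^+ 2 =
  (C ^+ 2 + S ^+ 2) * (u ^+ 2 + v ^+ 2) by ring.
by rewrite h mul1r.
Qed.

Lemma rot_sq' (C S u v w : R) : C ^+ 2 + S ^+ 2 = 1 ->
  (C * u + S * v) ^+ 2 + (- S * u + C * v) ^+ 2 + w ^+ 2 = u ^+ 2 + v ^+ 2 + w ^+ 2.
Proof.
move=> h; have -> : (C * u + S * v) ^+ 2 + (- S * u + C * v) ^+ 2 =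
  (C ^+ 2 + S ^+ 2) * (u ^+ 2 + v ^+ 2) by ring.
by rewrite h mul1r.
Qed.

Lemma rot_inv1 (C S u v : R) : C ^+ 2 + S ^+ 2 = 1 ->
  C * (C * u - S * v) + S * (S * u + C * v) = u.
Proof.
move=> h; have -> : C * (C * u - S * v) + S * (S * u + C * v) = (C ^+ 2 + S ^+ 2) * u by ring.
by rewrite h mul1r.
Qed.

Lemma rot_inv2 (C S u v : R) : C ^+ 2 + S ^+ 2 = 1 ->
  - S * (C * u - S * v) + C * (S * u + C * v) = v.
Proof.
move=> h; have -> : - S * (C * u - S * v) + C * (S * u + C * v) = (C ^+ 2 + S ^+ 2) * v by ring.
by rewrite h mul1r.
Qed.

Lemma rot_inv3 (C S u v : R) : C ^+ 2 + S ^+ 2 = 1 ->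
  C * (C * u + S * v) - S * (- S * u + C * v) = u.
Proof.
move=> h; have -> : C * (C * u + S * v) - S * (- S * u + C * v) = (C ^+ 2 + S ^+ 2) * u by ring.
by rewrite h mul1r.
Qed.

Lemma rot_inv4 (C S u v : R) : C ^+ 2 + S ^+ 2 = 1 ->
  S * (C * u + S * v) + C * (- S * u + C * v) = v.
Proof.
move=> h; have -> : S * (C * u + S * v) + C * (- S * u + C * v) = (C ^+ 2 + S ^+ 2) * v by ring.
by rewrite h mul1r.
Qed.

End R4.
Section Diffeo.
Context {R : realType} (rm rp : R) (tau alpha iota : R -> R).
Context (Htau : forall n, Ck n [set x : R | rm < x < rp] tau)
  (Halpha : forall n, Ck n [set x : R | rm < x < rp] alpha)
  (Hiota : forall n, Ck n setT iota)
  (HiI : forall y, rm < iota y < rp)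
  (Hti : forall y, tau (iota y) = y)
  (Hit : forall r, rm < r < rp -> iota (tau r) = r).

Definition Ginv (y : 'rV[R]_4) : 'rV[R]_4 :=
  mk4 (iota (c4 y 0))
    (cos (alpha (iota (c4 y 0))) * c4 y 1 + sin (alpha (iota (c4 y 0))) * c4 y 2)
    (- sin (alpha (iota (c4 y 0))) * c4 y 1 + cos (alpha (iota (c4 y 0))) * c4 y 2)
    (c4 y 3).

Lemma diffeo_gen : diffeomorphism (Sigma0 rm rp) (@Horizon R)
  (fun v => shift_rot (tau (c4 v 0)) (alpha (c4 v 0)) v).
Proof.
have oS := @open_strip R rm rp.
have oI := @open_oo R rm rp.
split.
  move=> x [xI xs]; rewrite /Horizon /shift_rot /=.
  have [_ -> -> ->] := c4_mk4 (tau (c4 x 0))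
    (cos (alpha (c4 x 0)) * c4 x 1 - sin (alpha (c4 x 0)) * c4 x 2)
    (sin (alpha (c4 x 0)) * c4 x 1 + cos (alpha (c4 x 0)) * c4 x 2) (c4 x 3).
  by rewrite rot_sq // cos2Dsin2.
split.
  move=> p [pI _]; exists [set v : 'rV[R]_4 | rm < c4 v 0 < rp].
  exists (fun v => shift_rot (tau (c4 v 0)) (alpha (c4 v 0)) v).
  split => //; split => //; apply: smooth_on_of => // n.
  set S := [set v : 'rV[R]_4 | rm < c4 v 0 < rp].
  have hA : Ck n S (fun v => alpha (c4 v 0)) :=
    Ck_comp oS (fun v Sv => Sv) (Halpha n) (Ck_c4 n S 0).
  have hT : Ck n S (fun v => tau (c4 v 0)) :=
    Ck_comp oS (fun v Sv => Sv) (Htau n) (Ck_c4 n S 0).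
  have hc : Ck n S (fun v => cos (alpha (c4 v 0))) :=
    Ck_comp oS (fun _ _ => Logic.I) (Ck_sincos n).2 hA.
  have hs : Ck n S (fun v => sin (alpha (c4 v 0))) :=
    Ck_comp oS (fun _ _ => Logic.I) (Ck_sincos n).1 hA.
  apply: Ck_mk4 => //; last exact: Ck_c4.
  - exact: Ck_add oS (Ck_mul oS hc (Ck_c4 _ _ 1)) (Ck_opp oS (Ck_mul oS hs (Ck_c4 _ _ 2))).
  - exact: Ck_add oS (Ck_mul oS hs (Ck_c4 _ _ 1)) (Ck_mul oS hc (Ck_c4 _ _ 2)).
exists Ginv; split; [|split; [|split]].
- move=> y ys; rewrite /Ginv /Sigma0 /=.
  have [-> -> -> ->] := c4_mk4 (iota (c4 y 0))
    (cos (alpha (iota (c4 y 0))) * c4 y 1 + sin (alpha (iota (c4 y 0))) * c4 y 2)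
    (- sin (alpha (iota (c4 y 0))) * c4 y 1 + cos (alpha (iota (c4 y 0))) * c4 y 2)
    (c4 y 3).
  by split; [exact: HiI|rewrite rot_sq' // cos2Dsin2].
- move=> x [xI _]; rewrite /Ginv /shift_rot.
  have [-> -> -> ->] := c4_mk4 (tau (c4 x 0))
    (cos (alpha (c4 x 0)) * c4 x 1 - sin (alpha (c4 x 0)) * c4 x 2)
    (sin (alpha (c4 x 0)) * c4 x 1 + cos (alpha (c4 x 0)) * c4 x 2) (c4 x 3).
  by rewrite Hit // rot_inv1 ?rot_inv2 ?cos2Dsin2 // mk4_c4.
- move=> y _; rewrite /Ginv /shift_rot.
  have [-> -> -> ->] := c4_mk4 (iota (c4 y 0))
    (cos (alpha (iota (c4 y 0))) * c4 y 1 + sin (alpha (iota (c4 y 0))) * c4 y 2)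
    (- sin (alpha (iota (c4 y 0))) * c4 y 1 + cos (alpha (iota (c4 y 0))) * c4 y 2)
    (c4 y 3).
  by rewrite Hti rot_inv3 ?rot_inv4 ?cos2Dsin2 // mk4_c4.
- move=> p _; exists setT, Ginv; split => //; split => //.
  apply: smooth_on_of; first exact: openT.
  move=> n; have oT : open (@setT 'rV[R]_4) := openT.
  have hi : Ck n setT (fun v : 'rV[R]_4 => iota (c4 v 0)) :=
    Ck_comp oT (fun _ _ => Logic.I) (Hiota n) (Ck_c4 n setT 0).
  have hA : Ck n setT (fun v : 'rV[R]_4 => alpha (iota (c4 v 0))) :=
    Ck_comp oT (fun v _ => HiI (c4 v 0)) (Halpha n) hi.
  have hc : Ck n setT (fun v : 'rV[R]_4 => cos (alpha (iota (c4 v 0)))) :=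
    Ck_comp oT (fun _ _ => Logic.I) (Ck_sincos n).2 hA.
  have hs : Ck n setT (fun v : 'rV[R]_4 => sin (alpha (iota (c4 v 0)))) :=
    Ck_comp oT (fun _ _ => Logic.I) (Ck_sincos n).1 hA.
  have hms : Ck n setT (fun v : 'rV[R]_4 => - sin (alpha (iota (c4 v 0)))) := Ck_opp oT hs.
  apply: Ck_mk4 => //; last exact: Ck_c4.
  - exact: Ck_add oT (Ck_mul oT hc (Ck_c4 _ _ 1)) (Ck_mul oT hs (Ck_c4 _ _ 2)).
  - exact: Ck_add oT (Ck_mul oT hms (Ck_c4 _ _ 1)) (Ck_mul oT hc (Ck_c4 _ _ 2)).
Qed.

End Diffeo.
Section Inverse.
Context {R : realType}.

Lemma Ck_inverse (I : set R) (tau iota : R -> R) : open I ->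
  (forall n, Ck n I tau) -> (forall x, I x -> 0 < 'D_1 tau x) ->
  (forall y, I (iota y)) -> (forall y, tau (iota y) = y) ->
  (forall r, I r -> iota (tau r) = r) -> forall n, Ck n setT iota.
Proof.
move=> oI Ht Hpos HI Hti Hit.
have dtau : forall x, I x -> derivable tau x 1.
  by move=> x Ix; have [_ [d _]] := Ht 1%N; exact: d.
have ctau : forall x, I x -> {for x, continuous tau} := Ck_cont (Ht 0%N).
have der : forall y, derivable iota y 1 /\ 'D_1 iota y = ('D_1 tau (iota y))^-1.
  move=> y; have Ix := HI y.
  have c1 : {near iota y, cancel tau iota} := near_of_open oI Ix Hit.
  have c2 : {near iota y, continuous tau} := near_of_open oI Ix ctau.
  have d : is_derive (iota y) 1 tau ('D_1 tau (iota y)) := DeriveDef (dtau _ Ix) erefl.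
  have ne : 'D_1 tau (iota y) != 0 := lt0r_neq0 (Hpos _ Ix).
  have := is_derive_inverse c1 c2 d ne; rewrite Hti; case=> d1 v1.
  by split.
have Hk : forall n, Ck n I (fun r => ('D_1 tau r)^-1).
  move=> n; have [_ [_ h]] := Ht n.+1.
  exact: (Ck_comp oI (fun r Ir => Hpos r Ir) (Ck_inv n) (h 1)).
have oT : open (@setT R) := openT.
elim=> [|n IH].
  by move=> y _; apply: cont_of_der; exact: (der y).1.
apply: Ck1_intro => //; first by move=> y _; exact: (der y).1.
apply: (@Ck_ext R R R n setT (fun y => ('D_1 tau (iota y))^-1)) => //.
  by move=> y _; rewrite (der y).2.
exact: (Ck_comp oT (fun y _ => HI y) (Hk n) IH).
Qed.

End Inverse.

Section DSK.
Context {R : realType} (M a Lam rm rp r0 : R).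

Definition fT (s : R) := lambdaK a Lam * (a ^+ 2 + s ^+ 2) / Delta_r M a Lam s.
Definition fA (s : R) := lambdaK a Lam * a / Delta_r M a Lam s.

Lemma lam_pos : 0 < lambdaK a Lam -> 0 < lambdaK a Lam.
Proof. by []. Qed.

Context (HM : 0 < M) (HL : 0 < Lam) (Hm : 0 < rm) (Hmp : rm < rp)
 (Dm : Delta_r M a Lam rm = 0) (Dp : Delta_r M a Lam rp = 0)
 (Dpos : forall r, rm < r < rp -> 0 < Delta_r M a Lam r) (H0 : rm < r0 < rp).

Lemma lamK_pos : 0 < lambdaK a Lam.
Proof.
rewrite /lambdaK; have : 0 <= Lam * a ^+ 2 / 3.
  by rewrite divr_ge0 // mulr_ge0 // ?sqr_ge0 // ltW.
lra.
Qed.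

Lemma Ck_Delta n (U : set R) : open U -> Ck n U (Delta_r M a Lam).
Proof.
move=> oU.
apply: (@Ck_ext R R R n U (fun r => (r * r + a ^+ 2) * (1 + (- (Lam / 3)) * (r * r)) + (- (2 * M)) * r)) => //.
  by move=> r _; rewrite /Delta_r; ring.
have Hid := @Ck_id R R n U.
have Hsq : Ck n U (fun r : R => r * r) := Ck_mul oU Hid Hid.
exact: (Ck_add oU (Ck_mul oU (Ck_add oU Hsq (Ck_cst _ _ _))
   (Ck_add oU (Ck_cst _ _ _) (Ck_mul oU (Ck_cst _ _ _) Hsq))) (Ck_mul oU (Ck_cst _ _ _) Hid)).
Qed.

Lemma Ck_invDelta n : Ck n [set x : R | rm < x < rp] (fun s => (Delta_r M a Lam s)^-1).
Proof.
have oI := @open_oo R rm rp.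
exact: (Ck_comp oI (fun r Ir => Dpos Ir) (Ck_inv n) (Ck_Delta n oI)).
Qed.

Lemma Ck_fT n : Ck n [set x : R | rm < x < rp] fT.
Proof.
have oI := @open_oo R rm rp.
have Hid := @Ck_id R R n [set x : R | rm < x < rp].
have Hsq : Ck n [set x : R | rm < x < rp] (fun r : R => r ^+ 2).
  apply: (@Ck_ext R R R n _ (fun r : R => r * r)); first exact: oI.
    by move=> r _; rewrite expr2.
  exact: (Ck_mul oI Hid Hid).
exact: (Ck_mul oI (Ck_mul oI (Ck_cst _ _ _) (Ck_add oI (Ck_cst _ _ _) Hsq)) (Ck_invDelta n)).
Qed.

Lemma Ck_fA n : Ck n [set x : R | rm < x < rp] fA.
Proof.
have oI := @open_oo R rm rp.
exact: (Ck_mul oI (Ck_cst _ _ _) (Ck_invDelta n)).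
Qed.

Lemma Ck_oint (g : R -> R) : (forall n, Ck n [set x : R | rm < x < rp] g) ->
  forall n, Ck n [set x : R | rm < x < rp] (oint g r0).
Proof.
move=> Hg.
have oI := @open_oo R rm rp.
have cg : forall y, rm < y < rp -> {for y, continuous g} := Ck_cont (Hg 0%N).
suff H : forall n, Ck n.+1 [set x : R | rm < x < rp] (oint g r0).
  by move=> n; exact: Ck_S (H n).
move=> n; apply: Ck1_intro => //.
  by move=> x Ix; exact: (oint_deriv cg H0 Ix).1.
apply: (@Ck_ext R R R n _ g _ oI _ (Hg n)).
by move=> x Ix; rewrite (oint_deriv cg H0 Ix).2.
Qed.

Lemma T_deriv x : rm < x < rp ->
  derivable (Tfun M a Lam r0) x 1 /\ 'D_1 (Tfun M a Lam r0) x = fT x.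
Proof.
move=> Ix.
have cg : forall y, rm < y < rp -> {for y, continuous fT} := Ck_cont (Ck_fT 0%N).
exact: (oint_deriv cg H0 Ix).
Qed.

Lemma Ck_T n : Ck n [set x : R | rm < x < rp] (Tfun M a Lam r0).
Proof. exact: (Ck_oint Ck_fT n). Qed.

Lemma Ck_A n : Ck n [set x : R | rm < x < rp] (Afun M a Lam r0).
Proof. exact: (Ck_oint Ck_fA n). Qed.

Lemma fT_pos x : rm < x < rp -> 0 < fT x.
Proof.
move=> Ix; rewrite /fT; apply: divr_gt0; last exact: Dpos.
apply: mulr_gt0; first exact: lamK_pos.
have : 0 < x ^+ 2 by rewrite exprn_gt0 //; case/andP: Ix => h _; exact: lt_trans h.
have := sqr_ge0 a; lra.
Qed.


Lemma T_incr x y : rm < x -> x < y -> y < rp ->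
  Tfun M a Lam r0 x < Tfun M a Lam r0 y.
Proof.
have Hm' : 0 < rm := Hm; have Hmp' : rm < rp := Hmp; have HM' : 0 < M := HM; have HL' : 0 < Lam := HL; have [m0' p0'] : rm < r0 /\ r0 < rp := andP H0.
move=> mx xy yp.
have Iz : forall z, x <= z <= y -> rm < z < rp.
  by move=> z /andP[xz zy]; apply/andP; split; lra.
have dT : forall z, z \in `]x, y[ -> is_derive z 1 (Tfun M a Lam r0) (fT z).
  move=> z; rewrite in_itv /= => /andP[xz zy].
  have [d v] := T_deriv (Iz z (andP_intro (ltW xz) (ltW zy))).
  exact: DeriveDef d v.
have cT : {within `[x, y], continuous (Tfun M a Lam r0)}.
  apply: continuous_in_subspaceT => z; rewrite inE /= in_itv /= => /andP[xz zy].
  apply: cont_of_der; exact: (T_deriv (Iz z (andP_intro xz zy))).1.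
have [c cI E] := @MVT R (Tfun M a Lam r0) fT x y xy dT cT.
- rewrite -subr_gt0 E; apply: mulr_gt0; last by rewrite subr_gt0.
  apply: fT_pos; apply: Iz; move: cI; rewrite in_itv /= => /andP[h1 h2].
  by rewrite ltW // ltW.
Qed.

Definition KR := Lam / 3 * (2 * rp) * (2 * rp ^+ 2) + Lam * a ^+ 2 / 3 * (2 * rp) + 2 * M.

Lemma KR_pos : 0 < KR.
Proof.
have Hm' : 0 < rm := Hm; have Hmp' : rm < rp := Hmp; have HM' : 0 < M := HM; have HL' : 0 < Lam := HL; have [m0' p0'] : rm < r0 /\ r0 < rp := andP H0.
rewrite /KR.
have rp0 : 0 < rp by lra.
have L3 : 0 <= Lam / 3 by rewrite divr_ge0 // ltW.
have La : 0 <= Lam * a ^+ 2 / 3 by rewrite divr_ge0 // mulr_ge0 // ?sqr_ge0 // ltW.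
have h1 : 0 <= Lam / 3 * (2 * rp) * (2 * rp ^+ 2).
  apply: mulr_ge0; first by apply: mulr_ge0 => //; lra.
  have := sqr_ge0 rp; lra.
have h2 : 0 <= Lam * a ^+ 2 / 3 * (2 * rp).
  by apply: mulr_ge0 => //; lra.
lra.
Qed.

Lemma Delta_right s : 0 <= s -> s <= rp -> Delta_r M a Lam s <= KR * (rp - s).
Proof.
have Hm' : 0 < rm := Hm; have Hmp' : rm < rp := Hmp; have HM' : 0 < M := HM; have HL' : 0 < Lam := HL; have [m0' p0'] : rm < r0 /\ r0 < rp := andP H0.
move=> s0 sp.
set Q := - (s + rp) + Lam / 3 * (s + rp) * (s ^+ 2 + rp ^+ 2) + Lam * a ^+ 2 / 3 * (s + rp) + 2 * M.
have E : Delta_r M a Lam s - Delta_r M a Lam rp = (rp - s) * Q.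
  by rewrite /Delta_r /Q; ring.
rewrite Dp subr0 in E; rewrite E [X in _ <= X]mulrC; apply: ler_wpM2l; first lra.
have L3 : 0 <= Lam / 3 by rewrite divr_ge0 // ltW.
have La : 0 <= Lam * a ^+ 2 / 3 by rewrite divr_ge0 // mulr_ge0 // ?sqr_ge0 // ltW.
have h3 : s + rp <= 2 * rp by lra.
have h4 : s ^+ 2 + rp ^+ 2 <= 2 * rp ^+ 2.
  have : s ^+ 2 <= rp ^+ 2 by rewrite ler_sqr // ?nnegrE //; lra.
  lra.
have h5 : 0 <= s + rp by lra.
have h6 : 0 <= s ^+ 2 + rp ^+ 2 by rewrite addr_ge0 // sqr_ge0.
have k1 : Lam / 3 * (s + rp) * (s ^+ 2 + rp ^+ 2) <= Lam / 3 * (2 * rp) * (2 * rp ^+ 2).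
  exact: (ler_pM (mulr_ge0 L3 h5) h6 (ler_wpM2l L3 h3) h4).
have k2 : Lam * a ^+ 2 / 3 * (s + rp) <= Lam * a ^+ 2 / 3 * (2 * rp).
  exact: ler_wpM2l.
rewrite /Q /KR; lra.
Qed.

Lemma Delta_left s : rm <= s -> s <= r0 -> Delta_r M a Lam s <= 2 * r0 * (s - rm).
Proof.
have Hm' : 0 < rm := Hm; have Hmp' : rm < rp := Hmp; have HM' : 0 < M := HM; have HL' : 0 < Lam := HL; have [m0' p0'] : rm < r0 /\ r0 < rp := andP H0.
move=> ms sr.
set Q := (s + rm) - Lam / 3 * (s + rm) * (s ^+ 2 + rm ^+ 2) - Lam * a ^+ 2 / 3 * (s + rm) - 2 * M.
have E : Delta_r M a Lam s - Delta_r M a Lam rm = (s - rm) * Q.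
  by rewrite /Delta_r /Q; ring.
rewrite Dm subr0 in E; rewrite E [X in _ <= X]mulrC; apply: ler_wpM2l; first lra.
have L3 : 0 <= Lam / 3 by rewrite divr_ge0 // ltW.
have La : 0 <= Lam * a ^+ 2 / 3 by rewrite divr_ge0 // mulr_ge0 // ?sqr_ge0 // ltW.
have h5 : 0 <= s + rm by lra.
have h6 : 0 <= s ^+ 2 + rm ^+ 2 by rewrite addr_ge0 // sqr_ge0.
have k1 : 0 <= Lam / 3 * (s + rm) * (s ^+ 2 + rm ^+ 2) := mulr_ge0 (mulr_ge0 L3 h5) h6.
have k2 : 0 <= Lam * a ^+ 2 / 3 * (s + rm) := mulr_ge0 La h5.
rewrite /Q; case/andP: H0 => h1 h2; lra.
Qed.

Lemma T_above B : exists s, r0 < s < rp /\ B <= Tfun M a Lam r0 s.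
Proof.
have Hm' : 0 < rm := Hm; have Hmp' : rm < rp := Hmp; have HM' : 0 < M := HM; have HL' : 0 < Lam := HL; have [m0' p0'] : rm < r0 /\ r0 < rp := andP H0.
case/andP: H0 => m0 p0.
have r0pos : 0 < r0 by lra.
have lk := lamK_pos.
have kr := KR_pos.
apply: (@log_unbounded R _ (lambdaK a Lam * r0 ^+ 2 / KR) rp r0) => //.
  by rewrite divr_gt0 // mulr_gt0 // exprn_gt0.
move=> s /andP[r0s sp].
have sI : rm < s < rp by apply/andP; split; lra.
have [d v] := T_deriv sI; split => //; rewrite v /fT.
have q0 : 0 < rp - s by lra.
have D0 := Dpos sI.
have Dle := Delta_right (ltW (lt_le_trans r0pos r0s)) (ltW sp).
rewrite ler_pdivrMr // [X in _ <= X]mulrAC ler_pdivlMr //.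
have e1 : lambdaK a Lam * r0 ^+ 2 / KR * Delta_r M a Lam s <= lambdaK a Lam * r0 ^+ 2 * (rp - s).
  rewrite mulrAC ler_pdivrMr // -[X in _ <= X]mulrA.
  apply: ler_wpM2l; first by rewrite mulr_ge0 // ?sqr_ge0 // ltW.
  by rewrite mulrC.
apply: (le_trans e1); rewrite [X in _ <= X]mulrC [X in X <= _]mulrC.
apply: ler_wpM2l; first exact: ltW.
apply: ler_wpM2l; first exact: ltW.
have : r0 ^+ 2 <= s ^+ 2 by rewrite ler_sqr // ?nnegrE ltW //; exact: lt_le_trans r0s.
have := sqr_ge0 a; lra.
Qed.

Lemma neg_comp_der (h : R -> R) s : derivable h (- s) 1 ->
  derivable (fun y => - h (- y)) s 1 /\ 'D_1 (fun y => - h (- y)) s = 'D_1 h (- s).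
Proof.
have Hm' : 0 < rm := Hm; have Hmp' : rm < rp := Hmp; have HM' : 0 < M := HM; have HL' : 0 < Lam := HL; have [m0' p0'] : rm < r0 /\ r0 < rp := andP H0.
move=> dh.
have dphi : derivable (fun y : R => - y) s 1 :=
  @derivableN R R R (fun y => y) s 1 (@derivable_id _ _ s 1).
have vphi : 'D_1 (fun y : R => - y) s = -1.
  have := @deriveN R R R (fun y => y) s 1 (@derivable_id _ _ s 1).
  rewrite derive_id; exact.
have [dc vc] := chain_rule dphi dh.
split; first exact: (@derivableN R R R (fun y => h (- y)) s 1 dc).
have := @deriveN R R R (fun y => h (- y)) s 1 dc.
rewrite vc vphi mulrN1 opprK; exact.
Qed.

Lemma T_below B : exists s, rm < s < r0 /\ Tfun M a Lam r0 s <= B.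
Proof.
have Hm' : 0 < rm := Hm; have Hmp' : rm < rp := Hmp; have HM' : 0 < M := HM; have HL' : 0 < Lam := HL; have [m0' p0'] : rm < r0 /\ r0 < rp := andP H0.
case/andP: H0 => m0 p0.
have lk := lamK_pos.
have r0pos : 0 < r0 by lra.
have HF : forall s, - r0 <= s < - rm ->
    derivable (fun y => - Tfun M a Lam r0 (- y)) s 1 /\
    lambdaK a Lam * rm ^+ 2 / (2 * r0) / (- rm - s) <= 'D_1 (fun y => - Tfun M a Lam r0 (- y)) s.
  move=> s /andP[s1 s2].
  have tI : rm < - s < rp by apply/andP; split; lra.
  have [dT vT] := T_deriv tI.
  have [d v] := neg_comp_der dT.
  split => //; rewrite v vT /fT.
  have q0 : 0 < - rm - s by lra.
  have D0 := Dpos tI.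
  have Dle := Delta_left (ltW (andP tI).1) (ltac:(lra) : - s <= r0).
  have e2 : 0 < 2 * r0 by lra.
  rewrite ler_pdivrMr // [X in _ <= X]mulrAC ler_pdivlMr //.
  have e1 : lambdaK a Lam * rm ^+ 2 / (2 * r0) * Delta_r M a Lam (- s) <= lambdaK a Lam * rm ^+ 2 * (- rm - s).
    rewrite mulrAC ler_pdivrMr // -[X in _ <= X]mulrA.
    apply: ler_wpM2l; first by rewrite mulr_ge0 // ?sqr_ge0 // ltW.
    have -> : (- rm - s) = (- s - rm) by ring.
    by rewrite mulrC.
  apply: (le_trans e1); rewrite [X in _ <= X]mulrC [X in X <= _]mulrC.
  apply: ler_wpM2l; first exact: ltW.
  apply: ler_wpM2l; first exact: ltW.
  have : rm ^+ 2 <= (- s) ^+ 2 by rewrite ler_sqr // ?nnegrE ltW //; lra.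
  have := sqr_ge0 a; lra.
have [s [/andP[s1 s2] Bs]] := @log_unbounded R (fun y => - Tfun M a Lam r0 (- y))
   (lambdaK a Lam * rm ^+ 2 / (2 * r0)) (- rm) (- r0)
   ltac:(by rewrite divr_gt0 // ?mulr_gt0 // exprn_gt0)
   ltac:(by rewrite ltrN2) HF (- B).
exists (- s); split; first by apply/andP; split; lra.
by move: Bs; rewrite lerN2.
Qed.


Lemma T_surj y : exists r, rm < r < rp /\ Tfun M a Lam r0 r = y.
Proof.
have Hm' : 0 < rm := Hm; have Hmp' : rm < rp := Hmp; have [m0' p0'] : rm < r0 /\ r0 < rp := andP H0.
have [s2 [/andP[a2 b2] h2]] := T_above y.
have [s1 [/andP[a1 b1] h1]] := T_below y.
have s12 : s1 <= s2 by lra.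
have cT : {within `[s1, s2], continuous (Tfun M a Lam r0)}.
  apply: continuous_in_subspaceT => z; rewrite inE /= in_itv /= => /andP[xz zy].
  apply: cont_of_der; apply: (T_deriv _).1; apply/andP; split; lra.
have mm : Num.min (Tfun M a Lam r0 s1) (Tfun M a Lam r0 s2) <= y <=
          Num.max (Tfun M a Lam r0 s1) (Tfun M a Lam r0 s2).
  by rewrite ge_min h1 le_max h2 orbT.
have [c cI E] := @IVT R (Tfun M a Lam r0) s1 s2 y s12 cT mm.
exists c; split => //; move: cI; rewrite in_itv /= => /andP[c1 c2].
apply/andP; split; lra.
Qed.

Definition Tinv (y : R) : R := xget r0 [set r | rm < r < rp /\ Tfun M a Lam r0 r = y].

Lemma Tinv_spec y : rm < Tinv y < rp /\ Tfun M a Lam r0 (Tinv y) = y.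
Proof. exact: (xgetPex r0 (T_surj y)). Qed.

Lemma Tinv_T r : rm < r < rp -> Tinv (Tfun M a Lam r0 r) = r.
Proof.
move=> /andP[r1 r2].
have [/andP[t1 t2] tE] := Tinv_spec (Tfun M a Lam r0 r).
case: (ltgtP (Tinv (Tfun M a Lam r0 r)) r) => // h.
- by have := T_incr t1 h r2; rewrite tE ltxx.
- by have := T_incr r1 h t2; rewrite tE ltxx.
Qed.

Lemma Ck_Tinv n : Ck n setT Tinv.
Proof.
have oI := @open_oo R rm rp.
apply: (Ck_inverse oI Ck_T) => //.
- by move=> x Ix; rewrite (T_deriv Ix).2; exact: fT_pos.
- by move=> y; exact: (Tinv_spec y).1.
- by move=> y; exact: (Tinv_spec y).2.
- exact: Tinv_T.
Qed.

Lemma Fminus_diffeo : diffeomorphism (Sigma0 rm rp) (@Horizon R) (Fminus M a Lam r0).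
Proof.
exact: (@diffeo_gen R rm rp (Tfun M a Lam r0) (Afun M a Lam r0) Tinv Ck_T Ck_A Ck_Tinv
  (fun y => (Tinv_spec y).1) (fun y => (Tinv_spec y).2) Tinv_T).
Qed.

Lemma Fplus_diffeo : diffeomorphism (Sigma0 rm rp) (@Horizon R) (Fplus M a Lam r0).
Proof.
have oI := @open_oo R rm rp.
have oT : open (@setT R) := openT.
have Ht : forall n, Ck n [set x : R | rm < x < rp] (fun r => - Tfun M a Lam r0 r).
  by move=> n; exact: (Ck_opp oI (Ck_T n)).
have Ha : forall n, Ck n [set x : R | rm < x < rp] (fun r => - Afun M a Lam r0 r).
  by move=> n; exact: (Ck_opp oI (Ck_A n)).
have Hi : forall n, Ck n setT (fun y => Tinv (- y)).
  move=> n; exact: (Ck_comp oT (fun _ _ => Logic.I) (Ck_Tinv n) (Ck_opp oT (@Ck_id R R n setT))).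
apply: (@diffeo_gen R rm rp (fun r => - Tfun M a Lam r0 r) (fun r => - Afun M a Lam r0 r)
  (fun y => Tinv (- y)) Ht Ha Hi).
- by move=> y; exact: (Tinv_spec (- y)).1.
- by move=> y; rewrite (Tinv_spec (- y)).2 opprK.
- by move=> r Ir; rewrite opprK Tinv_T.
Qed.

End DSK.

Theorem mainTheorem15 (R : realType) (M a Lam rm rp r0 : R) :
  0 < M -> 0 < Lam -> 0 < rm -> rm < rp ->
  Delta_r M a Lam rm = 0 -> Delta_r M a Lam rp = 0 ->
  (forall r, rm < r < rp -> 0 < Delta_r M a Lam r) ->
  rm < r0 < rp ->
  diffeomorphism (Sigma0 rm rp) (@Horizon R) (Fplus M a Lam r0) /\
  diffeomorphism (Sigma0 rm rp) (@Horizon R) (Fminus M a Lam r0).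
Proof.
move=> HM HL Hm Hmp Dm Dp Dpos H0; split.
- by eapply Fplus_diffeo; eassumption.
- by eapply Fminus_diffeo; eassumption.
Qed.
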